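(* Let $|\text{-}|:\mathcal E\to\mathcal B$ be a concrete category which is cofibred over $\mathcal B$ and such that the $\mathcal Q_{\mathcal B}$-category $\overline{\mathcal E}$ is conically cocomplete. Then $\overline{\mathcal E}$ is tensored.
   Context: $\mathcal B$ has small hom-sets; $|\text{-}|$ is faithful; a map $f:|X|\to|Y|$ is an $\mathcal E$-morphism if it is $|f'|$ for some $f':X\to Y$; $\overline{\mathcal E}(X,Y)$ is the set of $\mathcal E$-morphisms $|X|\to|Y|$. For $\mathbf f\subseteq\mathcal B(S,T)$, $\mathbf h\subseteq\mathcal B(S,U)$ put $\mathbf h\swarrow\mathbf f=\{g\in\mathcal B(T,U)\mid\forall f\in\mathbf f:g\circ f\in\mathbf h\}$. $\mathcal E$ is cofibred if for every $X$ and map $f:|X|\to T$ there is $f\star X$ with $|f\star X|=T$ such that $g:T\to|Z|$ is an $\mathcal E$-morphism $f\star X\to Z$ iff $g\circ f$ is an $\mathcal E$-morphism $X\to Z$. The fibre $\mathcal E_T$ is the class of $Y$ with $|Y|=T$. A presheaf of extent $T$ on $\overline{\mathcal E}$ is a family of subsets $\varphi_X\subseteq\mathcal B(|X|,T)$ ($X\in\mathrm{ob}\,\mathcal E$) with $\varphi_X\circ\overline{\mathcal E}(X',X)\subseteq\varphi_{X'}$; a supremum of it is $Y$ with $|Y|=T$ and $\overline{\mathcal E}(Y,Z)=\bigcap_X\overline{\mathcal E}(X,Z)\swarrow\varphi_X$ for all $Z$. $\overline{\mathcal E}$ is conically cocomplete if for every $T$ and every (possibly large) family $(Y_i)_{i\in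 I}$ in $\mathcal E_T$, the presheaf $\varphi_X=\bigcup_i\overline{\mathcal E}(X,Y_i)$ has a supremum. $\overline{\mathcal E}$ is tensored if for every $X$ and every subset $\mathbf u\subseteq\mathcal B(|X|,T)$ there is $Y$ with $|Y|=T$ and $\overline{\mathcal E}(Y,Z)=\overline{\mathcal E}(X,Z)\swarrow\mathbf u$ for all $Z$. *)

(* Defs.v *)
Set Implicit Arguments.

Record Category := {
  Ob :> Type;
  Hom : Ob -> Ob -> Type;
  idm : forall A, Hom A A;
  comp : forall A B C, Hom B C -> Hom A B -> Hom A C;
  comp_assoc : forall A B C D (h : Hom C D) (g : Hom B C) (f : Hom A B),
      comp h (comp g f) = comp (comp h g) f;
  comp_idl : forall A B (f : Hom A B), comp (idm B) f = f;
  comp_idr : forall A B (f : Hom A B), comp f (idm A) = f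
}.

Arguments Hom {c}.
Arguments idm {c}.
Arguments comp {c A B C}.

Record Functor (E B : Category) := {
  fobj :> Ob E -> Ob B;
  fmap : forall X Y, Hom X Y -> Hom (fobj X) (fobj Y);
  fmap_id : forall X : Ob E, fmap X X (idm X) = idm (fobj X);
  fmap_comp : forall (X Y Z : Ob E) (g : Hom Y Z) (f : Hom X Y),
      fmap X Z (comp g f) = comp (fmap Y Z g) (fmap X Y f)
}.

Arguments fmap {E B} f {X Y} : rename.

Definition faithful {E B : Category} (F : Functor E B) : Prop :=
  forall X Y (f g : Hom X Y), fmap F f = fmap F g -> f = g.

Definition castl {B : Category} {A A' C : Ob B} (e : A = A') (g : Hom A' C)
  : Hom A C :=
  match e in _ = A0 return Hom A0 C -> Hom A C with
  | eq_refl => fun g => g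
  end g.

Definition castr {B : Category} {A C C' : Ob B} (e : C = C') (h : Hom A C')
  : Hom A C :=
  match e in _ = C0 return Hom A C0 -> Hom A C with
  | eq_refl => fun h => h
  end h.

(* f : |X| -> |Y| is an E-morphism X -> Y, i.e. f belongs to Ebar(X,Y) *)
Definition Emor {E B : Category} (F : Functor E B) (X Y : Ob E)
  (f : Hom (F X) (F Y)) : Prop :=
  exists f' : Hom X Y, fmap F f' = f.

(* cofibred: for every X and f : |X| -> T there is f*X in the fibre over T
   with  g : T -> |Z| an E-morphism f*X -> Z  iff  g o f is one X -> Z *)
Definition cofibred {E B : Category} (F : Functor E B) : Prop :=
  forall (X : Ob E) (T : Ob B) (f : Hom (F X) T),
    exists (Y : Ob E) (e : F Y = T),
      forall (Z : Ob E) (g : Hom T (F Z)),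
        Emor F Y Z (castl e g) <-> Emor F X Z (comp g f).

(* Ebar conically cocomplete: for every T and every (possibly large) family
   (Y_i) in the fibre E_T, the presheaf phi_X = U_i Ebar(X,Y_i) of extent T
   has a supremum Y, i.e. |Y| = T and
   Ebar(Y,Z) = /\_X Ebar(X,Z) <swarrow phi_X  for all Z. *)
Definition conically_cocomplete {E B : Category} (F : Functor E B) : Prop :=
  forall (T : Ob B) (I : Type) (Yf : I -> Ob E) (eY : forall i, F (Yf i) = T),
    let phi := fun (X : Ob E) (h : Hom (F X) T) =>
                 exists i : I, Emor F X (Yf i) (castr (eY i) h) in
    exists (Y : Ob E) (e : F Y = T),
      forall (Z : Ob E) (g : Hom T (F Z)),
        Emor F Y Z (castl e g) <->
        (forall (X : Ob E) (h : Hom (F X) T), phi X h -> Emor F X Z (comp g h)).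

(* Ebar tensored: for every X and every subset u of B(|X|,T) there is Y with
   |Y| = T and Ebar(Y,Z) = Ebar(X,Z) <swarrow u  for all Z. *)
Definition tensored {E B : Category} (F : Functor E B) : Prop :=
  forall (X : Ob E) (T : Ob B) (u : Hom (F X) T -> Prop),
    exists (Y : Ob E) (e : F Y = T),
      forall (Z : Ob E) (g : Hom T (F Z)),
        Emor F Y Z (castl e g) <->
        (forall f : Hom (F X) T, u f -> Emor F X Z (comp g f)).

(* Main.v *)
Require Import Defs.
From Stdlib Require Import ClassicalEpsilon.

Lemma castr_comp (B : Category) (a T : Ob B) (e : a = T) (A : Ob B) (h : Hom A T) :
  castr e h = comp (castr e (idm T)) h.
Proof. destruct e. simpl. now rewrite comp_idl. Qed.

Lemma castlr (B : Category) (a T : Ob B) (e : a = T) (C D : Ob B)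
  (g : Hom T C) (h : Hom D T) :
  comp (castl e g) (castr e h) = comp g h.
Proof. destruct e. reflexivity. Qed.

Lemma castl_id (B : Category) (a T : Ob B) (e : a = T) :
  castl e (castr e (idm T)) = idm a.
Proof. destruct e. reflexivity. Qed.

Theorem corollary4p8 (E B : Category) (F : Functor E B)
  (HF : faithful F) (Hcof : cofibred F) (Hcc : conically_cocomplete F) :
  tensored F.
Proof.
  intros X T u.
  set (I := {f : Hom (F X) T | u f}).
  assert (Hc : forall i : I, {Y : Ob E & {e : F Y = T |
      forall (Z : Ob E) (g : Hom T (F Z)),
        Emor F Y Z (castl e g) <-> Emor F X Z (comp g (proj1_sig i))}}).
  { intro i. destruct (constructive_indefinite_description _
      (Hcof X T (proj1_sig i))) as [Y H].
    exists Y. destruct (constructive_indefinite_description _ H) as [e H'].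
    exists e. exact H'. }
  set (Yf := fun i => projT1 (Hc i)).
  set (eY := fun i => proj1_sig (projT2 (Hc i))).
  assert (HY : forall i Z g, Emor F (Yf i) Z (castl (eY i) g) <->
                 Emor F X Z (comp g (proj1_sig i)))
    by (intro i; exact (proj2_sig (projT2 (Hc i)))).
  destruct (Hcc T I Yf eY) as [Y [e HYs]].
  exists Y, e. intros Z g. rewrite HYs. split.
  - intros H f uf. apply H. exists (exist _ f uf).
    set (i := exist _ f uf : I).
    rewrite castr_comp.
    change f with (proj1_sig i).
    apply (HY i (Yf i)). rewrite castl_id. exists (idm _). apply fmap_id.
  - intros H X' h [i [k Hk]].
    destruct (proj2 (HY i Z g) (H _ (proj2_sig i))) as [m Hm].
    exists (comp m k). rewrite fmap_comp, Hm, Hk. apply castlr.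
Qed.
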